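(* Let $G=(V,E)$ be a finite, simple, connected graph which is locally connected and reflective, and assume $G$ is distance regular with intersection array $(b_0,b_1,\ldots,b_{L-1};c_1=1,\ldots,c_L)$. Then the Ollivier curvature of every edge is $\kappa(x,y)=1+b_0-b_1$. Moreover $G$ is Lichnerowicz sharp, i.e. the smallest positive eigenvalue $\lambda$ of $-\Delta$ satisfies $\lambda=1+b_0-b_1$.
   Context: Locally connected: for every vertex $v$ the subgraph induced on the neighbors of $v$ is connected. $d$ is the combinatorial distance. Distance regular with intersection array $(b_0,\ldots,b_{L-1};c_1,\ldots,c_L)$: $G$ has diameter $L$ and for every $x$ and every $z$ with $d(x,z)=n$, $z$ has $b_n$ neighbors at distance $n+1$ from $x$ and $c_n$ neighbors at distance $n-1$ from $x$ (with the usual convention $b_L=0$). Laplacian $\Delta f(x)=\sum_{y\sim x}(f(y)-f(x))$. Ollivier curvature: $\kappa(x,y)=\inf\{\Delta f(x)-\Delta f(y): f(y)-f(x)=1,\ \max_{u\sim v}|f(u)-f(v)|=1\}$. For adjacent $x\sim y$ let $V_x^y=\{v: d(v,x)<d(v,y)\}$, $V^{xy}=\{v:d(v,x)=d(v,y)\}$. A reflection from $x$ to $y$ is a graph automorphism $\phi$ with $\phi\circ\phi=\mathrm{id}$, $\phi(x)=y$, such that the edges between $V_x^y$ and $V_y^x$ are exactly $\{\{x',\phi(x')\}:x'\in V_x^y\}$ and $\phi$ fixes $V^{xy}$ pointwise. $G$ is reflective if every edge admits a reflection. *)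

(* Defs.v *)
From HB Require Import structures.
From mathcomp Require Import all_boot all_order all_algebra.
From mathcomp Require Import boolp classical_sets reals.
Set Implicit Arguments. Unset Strict Implicit. Unset Printing Implicit Defensive.
Import Order.TTheory GRing.Theory Num.Theory.

Section Graphs.
Variable T : finType.
Variable e : rel T.

Definition simple_graph := symmetric e /\ irreflexive e.

Definition graph_connected := forall x y : T, connect e x y.

Definition locally_connected :=
  forall v a b : T, e v a -> e v b ->
    connect [rel u w | [&& e v u, e v w & e u w]] a b.

Fixpoint reach (n : nat) (x y : T) : bool :=
  if n is n'.+1 then reach n' x y || [exists z, reach n' x z && e z y]
  else x == y.

(* combinatorial distance (equals #|T| when y is unreachable from x) *)
Definition dist (x y : T) : nat := find (fun n => reach n x y) (iota 0 #|T|).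

(* distance regular with intersection array (b_0..b_{L-1}; c_1..c_L), with
   b_L = 0 forced by the counting condition at n = L *)
Definition distance_regular (L : nat) (b c : nat -> nat) :=
  [/\ (forall x y, dist x y <= L),
      (exists x y, dist x y = L) &
      forall x z, let n := dist x z in
        #|[set w | e z w & dist x w == n.+1]| = b n /\
        (1 <= n -> #|[set w | e z w & dist x w == n.-1]| = c n)].

Definition Vside (x y : T) : {set T} := [set v | dist v x < dist v y].
Definition Vmid (x y : T) : {set T} := [set v | dist v x == dist v y].

Definition reflection (x y : T) (phi : T -> T) :=
  [/\ (forall u v, e (phi u) (phi v) = e u v),
      (forall u, phi (phi u) = u),
      phi x = y,
      (forall u, u \in Vside x y -> phi u \in Vside y x /\ e u (phi u)) &
      ((forall u w, u \in Vside x y -> w \in Vside y x -> e u w -> w = phi u) /\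
       (forall u, u \in Vmid x y -> phi u = u))].

Definition reflective := forall x y, e x y -> exists phi, reflection x y phi.

Variable R : realType.
Local Open Scope ring_scope.

Definition laplacian (f : T -> R) (x : T) : R := \sum_(y | e x y) (f y - f x).

Definition lip_max (f : T -> R) : R :=
  \big[Num.max/0]_(p : T * T | e p.1 p.2) `|f p.1 - f p.2|.

Local Open Scope classical_set_scope.
Definition ollivier_curvature (x y : T) : R :=
  inf [set r : R | exists f : T -> R,
         [/\ f y - f x = 1, lip_max f = 1 & r = laplacian f x - laplacian f y]].

Definition eigenvalue_negLap (lam : R) :=
  exists f : T -> R, (exists v, f v != 0) /\
    forall v, - laplacian f v = lam * f v.

Definition smallest_pos_eigenvalue (lam : R) :=
  [/\ 0 < lam, eigenvalue_negLap lam &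
      forall mu, 0 < mu -> eigenvalue_negLap mu -> lam <= mu].
End Graphs.

(* Main.v *)
Require Import Defs.
From HB Require Import structures.
From mathcomp Require Import all_boot all_order all_algebra.
From mathcomp Require Import boolp classical_sets reals.
From mathcomp Require Import lra.
Import Order.TTheory GRing.Theory Num.Theory.
Set Implicit Arguments. Unset Strict Implicit. Unset Printing Implicit Defensive.

Section DistLemmas.
Variable T : finType.
Variable e : rel T.

Lemma reach_dist n a b : reach e n a b -> (dist e a b <= n)%N.
Proof.
move=> H; rewrite /dist.
case: (ltnP n #|T|) => Hn.
  rewrite leqNgt; apply/negP => Hlt.
  have := before_find 0%N Hlt; rewrite nth_iota // add0n H //.
by apply: leq_trans (find_size _ _) _; rewrite size_iota.
Qed.

Lemma dist_reach a b : (dist e a b < #|T|)%N -> reach e (dist e a b) a b.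
Proof.
rewrite /dist => H.
have Hs : (find (fun n => reach e n a b) (iota 0 #|T|) < size (iota 0 #|T|))%N
  by rewrite size_iota.
move: (Hs); rewrite -has_find => /(nth_find 0%N).
by rewrite nth_iota ?add0n // -(size_iota 0 #|T|).
Qed.

Lemma dist_refl a : dist e a a = 0%N.
Proof. by apply/eqP; rewrite -leqn0; apply: (@reach_dist 0%N) => /=. Qed.

Lemma dist_eq0 a b : dist e a b = 0%N -> a = b.
Proof.
move=> H; have : (dist e a b < #|T|)%N by rewrite H; apply/card_gt0P; exists a.
by move/dist_reach; rewrite H /= => /eqP.
Qed.

Lemma dist_edge a b : e a b -> a != b -> dist e a b = 1%N.
Proof.
move=> Hab Hne; apply/eqP; rewrite eqn_leq; apply/andP; split.
  apply: (@reach_dist 1%N) => /=; apply/orP; right; apply/existsP; exists a.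
  by rewrite eqxx Hab.
rewrite lt0n; apply/eqP => /dist_eq0 H; by rewrite H eqxx in Hne.
Qed.

Lemma dist1_edge a b : dist e a b = 1%N -> e a b.
Proof.
move=> H.
have Hne : a != b by apply/eqP => Hab; rewrite Hab dist_refl in H.
have : (dist e a b < #|T|)%N.
  rewrite H; apply/card_gt1P; exists a, b; done.
move/dist_reach; rewrite H /= (negbTE Hne) /= => /existsP [z /andP [/eqP -> ]] //.
Qed.

Lemma reach_mono n a b : reach e n a b -> reach e n.+1 a b.
Proof. by move=> H /=; rewrite H. Qed.

Lemma reach_step n a z w : reach e n a z -> e z w -> reach e n.+1 a w.
Proof. move=> H1 H2 /=; apply/orP; right; apply/existsP; exists z; by rewrite H1. Qed.

Lemma reach_pres (phi : T -> T) :
  (forall u v, e (phi u) (phi v) = e u v) -> (forall u, phi (phi u) = u) ->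
  forall n a b, reach e n (phi a) (phi b) = reach e n a b.
Proof.
move=> He Hi; have inj : injective phi by apply: (can_inj Hi).
elim=> [|n IH] a b /=; first by rewrite (inj_eq inj).
rewrite IH; congr (_ || _); apply/existsP/existsP => [[z Hz]|[z Hz]].
  exists (phi z); by rewrite -{1}(Hi a) IH -{1}(Hi b) He.
by exists (phi z); rewrite IH He.
Qed.

Lemma dist_pres (phi : T -> T) :
  (forall u v, e (phi u) (phi v) = e u v) -> (forall u, phi (phi u) = u) ->
  forall a b, dist e (phi a) (phi b) = dist e a b.
Proof.
move=> He Hi a b; rewrite /dist; apply: eq_find => n.
by rewrite reach_pres.
Qed.

End DistLemmas.

Local Open Scope ring_scope.

Section BigMax.
Variable R : realType.

Lemma le_bigmax_seq (I : eqType) (r : seq I) (P : pred I) (F : I -> R) i :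
  i \in r -> P i -> F i <= \big[Num.max/0]_(j <- r | P j) F j.
Proof.
elim: r => // a r IH; rewrite inE big_cons => /orP [/eqP <-|Hi] HP.
  by rewrite HP le_max lexx.
case: (P a); last exact: IH.
by rewrite le_max (IH Hi HP) orbT.
Qed.

Lemma le_bigmax_fin (I : finType) (P : pred I) (F : I -> R) i :
  P i -> F i <= \big[Num.max/0]_(j | P j) F j.
Proof. by move=> HP; apply: le_bigmax_seq => //; rewrite mem_index_enum. Qed.

Lemma bigmax_cases (I : finType) (P : pred I) (F : I -> R) :
  let m := \big[Num.max/0]_(j | P j) F j in
  m = 0 \/ exists i, P i /\ m = F i.
Proof.
apply: (big_ind (fun m => m = 0 \/ exists i, P i /\ m = F i)).
- by left.
- move=> u v Hu Hv; case: (leP u v) => _; [exact: Hv | exact: Hu].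
- by move=> i Hi; right; exists i.
Qed.

Lemma bigmax_le (I : finType) (P : pred I) (F : I -> R) k :
  0 <= k -> (forall i, P i -> F i <= k) -> \big[Num.max/0]_(j | P j) F j <= k.
Proof.
move=> H0 H; apply: (big_ind (fun m => m <= k)) => //.
by move=> u v Hu Hv; rewrite ge_max Hu Hv.
Qed.

Lemma bigmax_scale (I : finType) (P : pred I) (F : I -> R) k :
  0 <= k -> k * \big[Num.max/0]_(j | P j) F j = \big[Num.max/0]_(j | P j) (k * F j).
Proof.
move=> Hk; apply: (big_morph (fun r => k * r)); last by rewrite mulr0.
by move=> u v; rewrite maxr_pMr.
Qed.

End BigMax.

Lemma sum_nat_bool (T : finType) (P Q : pred T) :
  (\sum_(i | P i) (Q i : nat) = #|[set i | P i & Q i]|)%N.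
Proof.
rewrite -sum1dep_card (big_mkcondr _ _ P Q) /=.
by apply: eq_bigr => i _; case: (Q i).
Qed.

Section Main.
Variable R : realType.
Variable T : finType.
Variable e : rel T.
Variables b c : nat -> nat.
Hypothesis Hsym : symmetric e.
Hypothesis Hirr : irreflexive e.
Hypothesis HDR : forall x z, let n := dist e x z in
        #|[set w | e z w & dist e x w == n.+1]| = b n /\
        (1 <= n -> #|[set w | e z w & dist e x w == n.-1]| = c n)%N.
Hypothesis Hc1 : c 1%N = 1%N.

Lemma edge_neq u v : e u v -> u != v.
Proof. by move=> H; apply/eqP => Huv; rewrite Huv Hirr in H. Qed.

Lemma degree z : #|[set w | e z w]| = b 0%N.
Proof.
have [H _] := HDR z z; rewrite dist_refl in H; rewrite -H.
apply: eq_card => w; rewrite !inE; case Hzw: (e z w) => //=.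
by rewrite dist_edge ?edge_neq.
Qed.

Lemma degree_split u z : e u z ->
  b 0%N = (1 + #|[set w | e z w & dist e u w == 1%N]| + b 1%N)%N.
Proof.
move=> Huz; have Hd : dist e u z = 1%N by rewrite dist_edge ?edge_neq.
have [H1 H2] := HDR u z; rewrite Hd in H1 H2.
have E0 : #|[set w | e z w & dist e u w == 0%N]| = 1%N by rewrite (H2 isT) Hc1.
have Hsplit : #|[set w | e z w]| = (#|[set w | e z w & dist e u w == 0%N]|
   + #|[set w | e z w & dist e u w == 1%N]| + #|[set w | e z w & dist e u w == 2%N]|)%N.
  rewrite -!sum_nat_bool -sum1dep_card -!big_split /=.
  apply: eq_bigr => w Hzw.
  have : (dist e u w <= 2)%N.
    apply: (@reach_dist _ _ 2%N); apply: (@reach_step T e 1%N u z w _ Hzw).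
    by apply: (@reach_step T e 0%N u u z) => //=.
  by case: (dist e u w) => [|[|[|]]].
by rewrite -(degree z) Hsplit E0 H1.
Qed.


Section Edge.
Variables x y : T.
Variable phi : T -> T.
Hypothesis Hxy : e x y.
Hypothesis Hphi : reflection e x y phi.

Let A := Vside e x y.
Let B := Vside e y x.
Let M := Vmid e x y.

Lemma Haut u v : e (phi u) (phi v) = e u v.
Proof. by case: Hphi. Qed.
Lemma Hinv u : phi (phi u) = u.
Proof. by case: Hphi. Qed.
Lemma Hphix : phi x = y.
Proof. by case: Hphi. Qed.
Lemma Hphiy : phi y = x.
Proof. by rewrite -Hphix Hinv. Qed.
Lemma phiA u : u \in A -> phi u \in B.
Proof. by case: Hphi => _ _ _ H _ /H []. Qed.
Lemma edgeA u : u \in A -> e u (phi u).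
Proof. by case: Hphi => _ _ _ H _ /H []. Qed.
Lemma nbB u w : u \in A -> w \in B -> e u w -> w = phi u.
Proof. by case: Hphi => _ _ _ _ [H _]; apply: H. Qed.
Lemma phiM u : u \in M -> phi u = u.
Proof. by case: Hphi => _ _ _ _ [_ H]; apply: H. Qed.
Lemma phiB u : u \in B -> phi u \in A.
Proof.
rewrite !inE => H.
by rewrite -Hphix -{1}Hphiy !(@dist_pres T e phi Haut Hinv).
Qed.

Lemma trich u : [|| u \in A, u \in B | u \in M].
Proof. rewrite !inE; by case: ltngtP. Qed.
Lemma disjAB u : u \in A -> u \in B -> False.
Proof. rewrite !inE => H1 H2; have := ltn_trans H1 H2; by rewrite ltnn. Qed.
Lemma disjAM u : u \in A -> u \in M -> False.
Proof. rewrite !inE => H1 /eqP H2; by rewrite H2 ltnn in H1. Qed.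
Lemma disjBM u : u \in B -> u \in M -> False.
Proof. rewrite !inE => H1 /eqP H2; by rewrite H2 ltnn in H1. Qed.

Lemma xA : x \in A.
Proof. by rewrite inE dist_refl (dist_edge Hxy (edge_neq Hxy)). Qed.

Lemma countM u : u \in A ->
  b 0%N = (1 + #|[set w | e u w & w \in M]| + b 1%N)%N.
Proof.
move=> HuA; rewrite (degree_split (edgeA HuA)); congr (_ + _ + _)%N.
apply: eq_card => w; rewrite !inE.
apply/idP/idP.
  case/andP => Hzw /eqP Hd; have Huw := dist1_edge Hd; rewrite Huw /=.
  have := trich w; case/or3P => Hw; last by move: Hw; rewrite inE.
  - have Hwz : e w (phi u) by rewrite Hsym.
    have := nbB Hw (phiA HuA) Hwz => /(congr1 phi); rewrite !Hinv => Heq.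
    by rewrite Heq Hirr in Huw.
  - have := nbB HuA Hw Huw => Heq; by rewrite Heq Hirr in Hzw.
case/andP => Huw HwM0; have HwM : w \in M by rewrite inE.
rewrite -(phiM HwM) Haut Huw /= (phiM HwM).
by rewrite (dist_edge Huw (edge_neq Huw)).
Qed.


Lemma cardB u : u \in A -> #|[set w | e u w & w \in B]| = 1%N.
Proof.
move=> HuA; rewrite -(cards1 (phi u)); apply: eq_card => w; rewrite finset.in_set1 finset.in_set.
apply/andP/eqP => [[Huw HwB]|->]; first exact: nbB.
by rewrite edgeA // phiA.
Qed.

Definition lam : R := 1 + (b 0%N)%:R - (b 1%N)%:R.

Lemma sumS u : u \in A ->
  \sum_(w | e u w) ((2 * (w \in B) + (w \in M))%N)%:R = lam :> R.
Proof.
move=> HuA; rewrite -natr_sum big_split /= -big_distrr /= !sum_nat_bool cardB //.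
rewrite /lam (countM HuA) muln1 !natrD.
lra.
Qed.

Definition g (w : T) : R := if w \in B then 1 else if w \in A then -1 else 0.

Lemma gA w : w \in A -> g w = -1.
Proof.
move=> H; rewrite /g H; case: ifP => // HB; by case: (disjAB H HB).
Qed.
Lemma gB w : w \in B -> g w = 1.
Proof. by move=> H; rewrite /g H. Qed.
Lemma gM w : w \in M -> g w = 0.
Proof.
move=> H; rewrite /g; case: ifP => HB; first by case: (disjBM HB H).
case: ifP => // HA; by case: (disjAM HA H).
Qed.

Lemma g_phi w : g (phi w) = - g w.
Proof.
have := trich w; case/or3P => Hw.
- by rewrite (gA Hw) (gB (phiA Hw)) opprK.
- by rewrite (gB Hw) (gA (phiB Hw)).
- by rewrite (phiM Hw) (gM Hw) oppr0.
Qed.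

Lemma g_range w : -1 <= g w <= 1.
Proof.
have := trich w; case/or3P => Hw; [rewrite gA | rewrite gB | rewrite gM] => //; lra.
Qed.

Lemma lap_phi (h : T -> R) v :
  laplacian e (fun w => h (phi w)) v = laplacian e h (phi v).
Proof.
rewrite /laplacian [RHS](reindex_inj (can_inj Hinv)) /=.
by apply: eq_bigl => w; rewrite Haut.
Qed.

Lemma lap_scale (h : T -> R) k v :
  laplacian e (fun w => k * h w) v = k * laplacian e h v.
Proof.
by rewrite /laplacian mulr_sumr; apply: eq_bigr => w _; rewrite mulrBr.
Qed.

Lemma lap_g_phi v : laplacian e g (phi v) = - laplacian e g v.
Proof.
rewrite -lap_phi /laplacian -sumrN; apply: eq_bigr => w _.
rewrite !g_phi; lra.
Qed.

Lemma lap_gA u : u \in A -> laplacian e g u = lam.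
Proof.
move=> HuA; rewrite /laplacian -(sumS HuA); apply: eq_bigr => w _.
rewrite (gA HuA).
have := trich w; case/or3P => Hw.
- have HB : (w \in B) = false by apply/negP => HB; case: (disjAB Hw HB).
  have HM : (w \in M) = false by apply/negP => HM; case: (disjAM Hw HM).
  rewrite (gA Hw) HB HM /=; lra.
- have HM : (w \in M) = false by apply/negP => HM; case: (disjBM Hw HM).
  rewrite (gB Hw) Hw HM /=; rewrite (_ : 2%:R = 1 + 1 :> R) //; lra.
- have HB : (w \in B) = false by apply/negP => HB; case: (disjBM HB Hw).
  rewrite (gM Hw) HB Hw /=; lra.
Qed.

Lemma eigen_g v : - laplacian e g v = lam * g v.
Proof.
have := trich v; case/or3P => Hv.
- by rewrite (lap_gA Hv) (gA Hv) mulrN1.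
- have := lap_g_phi (phi v); rewrite Hinv (lap_gA (phiB Hv)) => ->.
  by rewrite (gB Hv) mulr1 opprK.
- have := lap_g_phi v; rewrite (phiM Hv) (gM Hv) mulr0 => H.
  have H0 : laplacian e g v = 0 by lra.
  by rewrite H0 oppr0.
Qed.

Lemma lam_pos : 0 < lam.
Proof.
rewrite /lam (countM xA) !natrD.
have := ler0n R #|[set w | e x w & w \in M]|; lra.
Qed.

Lemma LB (f : T -> R) : f y - f x = 1 ->
  (forall u v, e u v -> `|f u - f v| <= 1) ->
  lam <= laplacian e f x - laplacian e f y.
Proof.
move=> H1 Hlip.
have E : laplacian e f y = \sum_(w | e x w) (f (phi w) - f y).
  rewrite /laplacian -Hphix (reindex_inj (can_inj Hinv)) /=.
  by apply: eq_bigl => w; rewrite Haut.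
rewrite E /laplacian -sumrB -(sumS xA); apply: ler_sum => w Hxw.
have := trich w; case/or3P => Hw.
- have HB : (w \in B) = false by apply/negP => HB; case: (disjAB Hw HB).
  have HM : (w \in M) = false by apply/negP => HM; case: (disjAM Hw HM).
  rewrite HB HM /=.
  have := Hlip _ _ (edgeA Hw); rewrite ler_norml => /andP [Ha Hb]; lra.
- have HM : (w \in M) = false by apply/negP => HM; case: (disjBM Hw HM).
  rewrite Hw HM /=.
  have Hwy : w = y by rewrite (nbB xA Hw Hxw) Hphix.
  rewrite Hwy Hphiy (_ : 2%:R = 1 + 1 :> R) //; lra.
- have HB : (w \in B) = false by apply/negP => HB; case: (disjBM HB Hw).
  rewrite HB Hw (phiM Hw) /=; lra.
Qed.

Lemma lip_le (f : T -> R) u v : e u v -> `|f u - f v| <= lip_max e f.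
Proof.
move=> H; rewrite /lip_max.
have := @le_bigmax_fin R (prod T T) (fun p : T * T => e p.1 p.2)
                      (fun p : T * T => `|f p.1 - f p.2|) (u, v) H.
by [].
Qed.

Lemma yB : y \in B.
Proof. rewrite -Hphix; exact: phiA xA. Qed.

Lemma curv : ollivier_curvature e R x y = lam.
Proof.
rewrite /ollivier_curvature.
set S := (X in inf X).
have Hlb : lbound S lam.
  move=> r [f [H1 H2 ->]]; apply: LB => // u v Huv; rewrite -H2; exact: lip_le.
pose f0 := fun w => 2^-1 * g w.
have HS : S lam.
  exists f0; split.
  - rewrite /f0 (gB yB) (gA xA); lra.
  - apply/le_anti/andP; split.
      apply: bigmax_le => // p _; rewrite /f0.
      have := g_range p.1; have := g_range p.2; move=> /andP[? ?] /andP[? ?].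
      rewrite ler_norml; apply/andP; split; lra.
    have := lip_le f0 Hxy; rewrite /f0 (gB yB) (gA xA).
    have -> : 2^-1 * -1 - 2^-1 * 1 = -1 :> R by lra.
    by rewrite normrN normr1.
  - rewrite /f0 !lap_scale (lap_gA xA) -Hphix lap_g_phi (lap_gA xA); lra.
apply/le_anti/andP; split.
  by apply: (ge_inf (E := S)) => //; exists lam.
by apply: lb_le_inf => //; exists lam.
Qed.
End Edge.
End Main.

Lemma path_const (T : finType) (e : rel T) (R : realType) (h : T -> R) :
  (forall u v, e u v -> h u = h v) ->
  forall p a, path e a p -> h (last a p) = h a.
Proof.
move=> H; elim=> [|q p IH] a //= /andP [Haq Hp].
by rewrite IH // -(H _ _ Haq).
Qed.

Theorem theorem2p13 (R : realType) (T : finType) (e : rel T)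
  (L : nat) (b c : nat -> nat) :
  simple_graph e -> graph_connected e ->
  locally_connected e -> reflective e ->
  (1 <= L)%N -> distance_regular e L b c -> c 1%N = 1%N ->
  (forall x y, e x y ->
     ollivier_curvature e R x y = 1 + (b 0%N)%:R - (b 1%N)%:R) /\
  smallest_pos_eigenvalue e (1 + (b 0%N)%:R - (b 1%N)%:R : R).
Proof.
move=> [Hsym Hirr] Hconn _ Hrefl HL [_ [x0 [y0 Hx0y0]] HDR] Hc1.
split.
  move=> x y Hxy; have [phi Hphi] := Hrefl x y Hxy.
  exact: (curv R Hsym Hirr HDR Hc1 Hxy Hphi).
have [a0 Ha0] : exists a, e x0 a.
  have := Hconn x0 y0; case/connectP => [[|q p]] /=.
    move=> _ Hy; rewrite Hy dist_refl in Hx0y0; by rewrite -Hx0y0 in HL.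
  by case/andP => Hq _ _; exists q.
have [phi0 Hphi0] := Hrefl x0 a0 Ha0.
split.
- exact: (lam_pos R Hsym Hirr HDR Hc1 Ha0 Hphi0).
- exists (g R e x0 a0); split; last exact: (eigen_g R Hsym Hirr HDR Hc1 Hphi0).
  exists x0; rewrite (gA R (xA Hirr Ha0)); by rewrite oppr_eq0 oner_eq0.
move=> mu Hmu [h [[v0 Hv0] Heig]].
have [[p1 [p2 [Hp Hne]]]|Hall] :=
  pselect (exists p1 p2, e p1 p2 /\ h p1 != h p2); last first.
  have Hc : forall u v, e u v -> h u = h v.
    move=> u v Huv; apply/eqP/negPn/negP => Hn; apply: Hall; by exists u, v.
  have Hl : laplacian e h v0 = 0.
    rewrite /laplacian big1 // => w Hw; by rewrite (Hc _ _ Hw) subrr.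
  have := Heig v0; rewrite Hl oppr0 => /esym/eqP; rewrite mulf_eq0 (negbTE Hv0) orbF.
  by rewrite gt_eqF.
set Lam := lip_max e h.
have HLpos : 0 < Lam.
  apply: lt_le_trans (lip_le h Hp); by rewrite normr_gt0 subr_eq0.
have Hor : forall x' y', e x' y' -> h y' - h x' = Lam -> 1 + (b 0%N)%:R - (b 1%N)%:R <= mu.
  move=> x' y' Hxy' Hd; have [phi Hphi] := Hrefl x' y' Hxy'.
  pose f := fun w => Lam^-1 * h w.
  have Hf1 : f y' - f x' = 1 by rewrite /f -mulrBr Hd mulVf // gt_eqF.
  have := LB Hsym Hirr HDR Hc1 Hxy' Hphi Hf1.
  rewrite /f !lap_scale -mulrBr.
  have -> : laplacian e h x' - laplacian e h y' = mu * Lam.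
    have E1 := Heig x'; have E2 := Heig y'.
    rewrite -Hd mulrBr; lra.
  rewrite mulrCA mulVf ?gt_eqF // mulr1; apply.
  move=> u v Huv; rewrite -mulrBr normrM gtr0_norm ?invr_gt0 //.
  rewrite ler_pdivrMl // mulr1; exact: lip_le.
have [H0|[q [Hq HLq]]] := bigmax_cases (fun p : T * T => e p.1 p.2)
     (fun p : T * T => `|h p.1 - h p.2|).
  by move: HLpos; rewrite /Lam /lip_max H0 ltxx.
rewrite -/(lip_max e h) -/Lam in HLq.
have [Hle|Hlt] := leP (h q.1) (h q.2).
  apply: (Hor q.1 q.2 Hq); rewrite HLq distrC ger0_norm // subr_ge0 //.
apply: (Hor q.2 q.1); first by rewrite Hsym.
rewrite HLq ger0_norm // subr_ge0 ltW //.
Qed.
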